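(* Let $P=\sum_{i=1}^nx^i\,dx^i\otimes\partial_{x^i}$, i.e. $P=\mathrm{diag}\{x^1,\dots,x^n\}$, on $\mathbb R^n$; it is a Nijenhuis operator on the tangent Lie algebroid $(T_{\mathbb R^n},[-,-],\mathrm{id})$. Then the Frölicher–Nijenhuis cohomology of $P$ vanishes in all degrees: $\mathrm H^k_{\mathrm{FN}}(T_{\mathbb R^n})=0$ for all $k\ge0$, i.e. the complex $(\Omega^\bullet(\mathbb R^n,T_{\mathbb R^n}),d_{\mathrm{FN}}=[P,-]_{\mathrm{FN}})$ is exact.
   Context: $\Omega^k(\mathbb R^n,T_{\mathbb R^n})=\Gamma(\wedge^kT^\vee_{\mathbb R^n}\otimes T_{\mathbb R^n})$ is the space of vector-valued $k$-forms. The Frölicher–Nijenhuis bracket is the $\mathbb R$-bilinear bracket given on $K=\alpha\otimes X$ ($\alpha$ a $k$-form, $X$ a vector field) and $L=\beta\otimes Y$ ($\beta$ an $l$-form) by $[K,L]_{\mathrm{FN}}=\alpha\wedge\beta\otimes[X,Y]+\alpha\wedge\mathcal L_X\beta\otimes Y-\mathcal L_Y\alpha\wedge\beta\otimes X+(-1)^kd\alpha\wedge i_X\beta\otimes Y+(-1)^ki_Y\alpha\wedge d\beta\otimes X$, where $d$ is the de Rham differential, $i_X$ contraction and $\mathcal L_X=i_Xd+di_X$ the Lie derivative. For a Nijenhuis operator $P$ (i.e. $[P,P]_{\mathrm{FN}}=0$), $d_{\mathrm{FN}}=[P,-]_{\mathrm{FN}}$ is a differential of degree $1$ and $\mathrm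 H^\bullet_{\mathrm{FN}}(T_{\mathbb R^n})$ denotes its cohomology. *)

(* Defs.v *)
From HB Require Import structures.
From mathcomp Require Import all_boot all_order all_algebra all_fingroup.
From mathcomp Require Import all_classical all_reals all_analysis.
Set Implicit Arguments. Unset Strict Implicit. Unset Printing Implicit Defensive.
Import Order.TTheory GRing.Theory Num.Theory.
Import numFieldNormedType.Exports.
Local Open Scope ring_scope.

Section FN.
Variables (R : realType) (n : nat).

Definition pt := 'rV[R]_n.
Definition ebasis (j : 'I_n) : pt := delta_mx 0 j.
Definition partial (j : 'I_n) (f : pt -> R) : pt -> R :=
  fun x => derive f x (ebasis j).
Definition iter_partial (l : seq 'I_n) (f : pt -> R) : pt -> R :=
  foldr partial f l.
Definition smooth (f : pt -> R) : Prop :=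
  forall (l : seq 'I_n) (x : pt), differentiable (iter_partial l f) x.

(* A (possibly inhomogeneous) differential form on R^n, given by its values
   alpha x [:: j1; ...; jk] = alpha_x(d_{j1}, ..., d_{jk}) on coordinate vector
   fields; the value on a sequence of length k is the degree-k component. *)
Definition form := pt -> seq 'I_n -> R.
Definition vfield := 'I_n -> pt -> R.
(* vector-valued forms K = sum_i K i (x) d_{x^i} *)
Definition vform := 'I_n -> form.

Definition permute (s : seq 'I_n) (sg : 'S_(size s)) : seq 'I_n :=
  [seq tnth (in_tuple s) (sg i) | i <- enum 'I_(size s)].
Definition psign (m : nat) (sg : 'S_m) : R := (-1) ^+ odd_perm sg.

Definition is_form (k : nat) (a : form) : Prop :=
  [/\ forall s, smooth (fun x => a x s),
      forall x s (sg : 'S_(size s)), a x (permute sg) = psign sg * a x s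
    & forall x s, size s != k -> a x s = 0].
Definition is_vform (k : nat) (K : vform) : Prop := forall i, is_form k (K i).

Definition wedge (a b : form) : form := fun x s =>
  \sum_(k < (size s).+1)
     ((k`!)%:R * ((size s - k)`!)%:R)^-1 *
     \sum_(sg : 'S_(size s))
        psign sg * a x (take k (permute sg)) * b x (drop k (permute sg)).

Definition dR (a : form) : form := fun x s =>
  \sum_(j < size s) (-1) ^+ j *
     partial (tnth (in_tuple s) j) (fun y => a y (take j s ++ drop j.+1 s)) x.

Definition contr (X : vfield) (a : form) : form := fun x s =>
  \sum_(m < n) X m x * a x (m :: s).

Definition addf (a b : form) : form := fun x s => a x s + b x s.

Definition lieD (X : vfield) (a : form) : form :=
  addf (contr X (dR a)) (dR (contr X a)).

Definition lieb (X Y : vfield) : vfield := fun m x =>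
  \sum_(j < n) (X j x * partial j (Y m) x - Y j x * partial j (X m) x).

Definition fn_dec (k : nat) (a : form) (X : vfield) (b : form) (Y : vfield)
  : vform := fun i x s =>
    wedge a b x s * lieb X Y i x
  + wedge a (lieD X b) x s * Y i x
  - wedge (lieD Y a) b x s * X i x
  + (-1) ^+ k * wedge (dR a) (contr X b) x s * Y i x
  + (-1) ^+ k * wedge (contr Y a) (dR b) x s * X i x.

Definition coordvf (a : 'I_n) : vfield := fun m _ => (m == a)%:R.

Definition fnb (k : nat) (K L : vform) : vform := fun i x s =>
  \sum_(a < n) \sum_(b < n) fn_dec k (K a) (coordvf a) (L b) (coordvf b) i x s.

Definition vzero : vform := fun _ _ _ => 0.

Definition Pdiag : vform := fun i x s => (s == [:: i])%:R * x ord0 i.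

Definition dFN (L : vform) : vform := fnb 1 Pdiag L.

End FN.

(* Main.v *)
Require Import Defs.
From HB Require Import structures.
From mathcomp Require Import all_boot all_order all_algebra all_fingroup.
From mathcomp Require Import all_classical all_reals all_analysis.
From mathcomp Require Import ring.
Import Order.TTheory GRing.Theory Num.Theory.
Import numFieldNormedType.Exports.
Local Open Scope ring_scope.
Set Implicit Arguments. Unset Strict Implicit. Unset Printing Implicit Defensive.
Section Comb.
Variable T : Type.

Definition rm (p : nat) (s : seq T) := take p s ++ drop p.+1 s.

Lemma size_rm p (s : seq T) : (p < size s)%N -> size (rm p s) = (size s).-1.
Proof.
move=> hp; rewrite /rm size_cat size_take hp size_drop.
by case: (size s) hp => // m hp; rewrite subSS /= subnKC.
Qed.

Lemma nth_rm x0 p (s : seq T) i : (p < size s)%N ->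
  nth x0 (rm p s) i = nth x0 s (bump p i).
Proof.
move=> hp; rewrite /rm nth_cat size_take hp /bump.
case: (ltnP i p) => hi.
  by rewrite nth_take.
rewrite nth_drop add1n; congr nth.
by rewrite addSn subnKC.
Qed.

Definition perm_seq (x0 : T) m (sg : 'S_m) (s : seq T) :=
  [seq nth x0 s (sg i) | i <- enum 'I_m].

Lemma size_perm_seq x0 m (sg : 'S_m) s : size (perm_seq x0 sg s) = m.
Proof. by rewrite size_map size_enum_ord. Qed.

Lemma nth_perm_seq x0 m (sg : 'S_m) s (i : 'I_m) :
  nth x0 (perm_seq x0 sg s) i = nth x0 s (sg i).
Proof.
rewrite (nth_map i) ?size_enum_ord //; congr (nth _ _ (val (sg _))).
by apply: val_inj; rewrite /= nth_enum_ord.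
Qed.

Lemma perm_decomp m (sg : 'S_m.+1) i : exists tau, sg = lift_perm i (sg i) tau.
Proof.
pose ulsf i (s : 'S_m.+1) k := odflt k (unlift (s i) (s (lift i k))).
have ulsfK i' (s : 'S_m.+1) k: lift (s i') (ulsf i' s k) = s (lift i' k).
  rewrite /ulsf; have:= neq_lift i' k.
  by rewrite -(can_eq (permK s)) => /unlift_some[] ? ? ->.
have inj_ulsf: injective (ulsf i sg).
  apply: can_inj (ulsf (sg i) sg^-1%g) _ => k'.
  by rewrite {1}/ulsf ulsfK !permK liftK.
exists (perm inj_ulsf); apply/permP=> k.
case: (unliftP i k) => [k'|] ->; rewrite ?lift_perm_id //.
by rewrite lift_perm_lift permE ulsfK.
Qed.

Lemma rm_perm_seq x0 m s (hs : size s = m.+1) (j p : 'I_m.+1) (tau : 'S_m) :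
  rm j (perm_seq x0 (lift_perm j p tau) s) = perm_seq x0 tau (rm p s).
Proof.
apply: (@eq_from_nth _ x0).
  by rewrite size_rm ?size_perm_seq // size_rm hs.
move=> i; rewrite size_rm ?size_perm_seq // => /= hi.
rewrite nth_rm ?size_perm_seq //.
have -> : bump j i = lift j (Ordinal hi) by [].
rewrite -[X in _ = nth _ _ X]/(nat_of_ord (Ordinal hi)).
by rewrite !nth_perm_seq lift_perm_lift nth_rm ?hs.
Qed.

Lemma cons_perm_seq x0 m b s (sg : 'S_m) :
  b :: perm_seq x0 sg s = perm_seq x0 (lift_perm ord0 ord0 sg) (b :: s).
Proof.
apply: (@eq_from_nth _ x0); first by rewrite /= !size_perm_seq.
move=> i; rewrite /= size_perm_seq; case: i => [|i] hi.
  have -> : 0%N = @ord0 m by [].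
  by rewrite nth_perm_seq lift_perm_id.
have -> : i.+1 = lift ord0 (Ordinal (hi : (i < m)%N)) by [].
rewrite nth_perm_seq lift_perm_lift /=.
rewrite -[X in nth _ _ X = _]/(nat_of_ord (Ordinal (hi : (i < m)%N))).
by rewrite nth_perm_seq add0n.
Qed.

End Comb.

Section PermSum.
Variable R : realType.

Lemma sum_perm_split m (F : 'S_m.+1 -> R) (j : 'I_m.+1) :
  \sum_(sg : 'S_m.+1) F sg = \sum_(p < m.+1) \sum_(tau : 'S_m) F (lift_perm j p tau).
Proof.
rewrite (partition_big (fun sg : 'S_m.+1 => sg j) predT) //=.
apply: eq_bigr => p _.
rewrite (reindex (lift_perm j p)) /=; last first.
  pose ulsf i (s : 'S_m.+1) k := odflt k (unlift (s i) (s (lift i k))).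
  have ulsfK i (s : 'S_m.+1) k: lift (s i) (ulsf i s k) = s (lift i k).
    rewrite /ulsf; have:= neq_lift i k.
    by rewrite -(can_eq (permK s)) => /unlift_some[] ? ? ->.
  have inj_ulsf: injective (ulsf j _).
    move=> s; apply: can_inj (ulsf (s j) s^-1%g) _ => k'.
    by rewrite {1}/ulsf ulsfK !permK liftK.
  exists (fun s => perm (inj_ulsf s)) => [s _ | s].
    by apply/permP=> k'; rewrite permE /ulsf lift_perm_lift lift_perm_id liftK.
  move/(s _ =P _) => si0; apply/permP=> k.
  case: (unliftP j k) => [k'|] ->; rewrite ?lift_perm_id //.
  by rewrite lift_perm_lift -si0 permE ulsfK.
by apply: eq_bigl => tau; rewrite lift_perm_id eqxx.
Qed.

Lemma psign_lift m (j p : 'I_m.+1) (tau : 'S_m) :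
  psign R (lift_perm j p tau) = (-1) ^+ (j + p)%N * psign R tau.
Proof.
rewrite /psign odd_lift_perm !signr_addb !signr_odd exprD.
by rewrite mulrA.
Qed.

Lemma psign_sq m (tau : 'S_m) : psign R tau * psign R tau = 1.
Proof. by rewrite /psign -signr_addb addbb. Qed.

End PermSum.

Section Ana.
Variables (R : realType) (n : nat).
Implicit Types (s t : seq 'I_n) (x y : pt R n).

Lemma partial_cst (j : 'I_n) (c : R) x : partial j (fun _ : pt R n => c) x = 0.
Proof. exact: (@derive_cst R (pt R n) R c x (ebasis R j)). Qed.

Lemma derive_affine (f : pt R n -> R) x v (C : R) :
  (forall h : R, f (h *: v + x) = f x + h * C) -> derive f x v = C.
Proof.
move=> H; rewrite /derive; apply: cvg_lim => //.
apply: cvg_near_cst; near=> h.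
have hh : h != 0 by near: h; exact: nbhs_dnbhs_neq.
rewrite /= H addrC addKr /=.
by rewrite [_ *: _]mulrA mulVf // mul1r.
Unshelve. all: by end_near.
Qed.

Lemma partial_coord (q a : 'I_n) (c : R) x :
  partial q (fun y => c * y ord0 a) x = c * (a == q)%:R.
Proof.
apply: derive_affine => h.
have -> : (h *: ebasis R q + x) ord0 a = h * ebasis R q ord0 a + x ord0 a.
  by rewrite [LHS]mxE [X in X + _]mxE.
rewrite /ebasis mxE eqxx /= mulrDr addrC; congr (_ + _).
by rewrite mulrCA.
Qed.

Lemma smooth_derivable (f : pt R n -> R) : smooth f -> forall x v, derivable f x v.
Proof. by move=> hf x v; apply: diff_derivable; exact: (hf [::] x). Qed.

Lemma partialZ (f : pt R n -> R) (k : R) j x : derivable f x (ebasis R j) ->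
  partial j (fun y => k * f y) x = k * partial j f x.
Proof. by move=> df; exact: (deriveZ k df). Qed.

Lemma partialN (f : pt R n -> R) j x : derivable f x (ebasis R j) ->
  partial j (fun y => - f y) x = - partial j f x.
Proof. by move=> df; exact: (deriveN df). Qed.

Lemma smoothN (f : pt R n -> R) : smooth f -> smooth (fun y => - f y).
Proof.
move=> hf.
suff E : forall l, iter_partial l (fun y => - f y) = fun y => - iter_partial l f y.
  by move=> l x; rewrite E; apply: differentiableN; exact: hf.
elim=> [|j l IH] //=.
rewrite IH; apply: funext => y.
apply: partialN; apply: diff_derivable; exact: hf.
Qed.

End Ana.

Section Forms.
Variables (R : realType) (n : nat).
Implicit Types (s t : seq 'I_n) (x y : pt R n).

Lemma dR_nat (x0 : 'I_n) (a : Defs.form R n) x s :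
  dR a x s = \sum_(0 <= j < size s)
     (-1) ^+ j * partial (nth x0 s j) (fun y => a y (rm j s)) x.
Proof. by rewrite /dR big_mkord; apply: eq_bigr => j _; rewrite (tnth_nth x0). Qed.

Lemma contr_coord (a : 'I_n) (b : Defs.form R n) x s :
  contr (coordvf (R:=R) a) b x s = b x (a :: s).
Proof.
rewrite /contr /coordvf (bigD1 a) //= eqxx mul1r big1 ?addr0 // => m /negbTE ->.
by rewrite mul0r.
Qed.

Lemma contr_coordE (a : 'I_n) (b : Defs.form R n) :
  contr (coordvf (R:=R) a) b = fun x s => b x (a :: s).
Proof. by apply: funext => x; apply: funext => s; apply: contr_coord. Qed.

Lemma lieb_coord (a b i : 'I_n) x : lieb (coordvf (R:=R) a) (coordvf (R:=R) b) i x = 0.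
Proof.
rewrite /lieb big1 // => j _; rewrite /coordvf !partial_cst.
by rewrite !mulr0 subrr.
Qed.

Lemma lieD_coord (a : 'I_n) (b : Defs.form R n) x s :
  lieD (coordvf (R:=R) a) b x s = partial a (fun y => b y s) x.
Proof.
rewrite /lieD /Defs.addf contr_coord contr_coordE !(dR_nat a) /=.
rewrite big_nat_recl // expr0 mul1r.
have -> : rm 0 (a :: s) = s by rewrite /rm /= drop0.
rewrite [X in _ + X + _](_ : _ = - \sum_(0 <= j < size s)
   (-1)^+j * partial (nth a s j) (fun y => b y (a :: rm j s)) x); last first.
  by rewrite -sumrN; apply: eq_bigr => j _; rewrite exprS mulN1r mulNr.
by rewrite subrK.
Qed.

Lemma lieD_coordE (a : 'I_n) (b : Defs.form R n) :
  lieD (coordvf (R:=R) a) b = fun x s => partial a (fun y => b y s) x.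
Proof. by apply: funext => x; apply: funext => s; apply: lieD_coord. Qed.

Lemma dR_Pdiag (a : 'I_n) x s : dR (Pdiag (R:=R) a) x s = 0.
Proof.
rewrite (dR_nat a) /Pdiag.
under eq_bigr => j _ do rewrite partial_coord.
case: s => [|p [|q [|r s]]].
- by rewrite big_geq.
- by rewrite big_nat1 /= !mul0r mulr0.
- rewrite big_nat_recl // big_nat1 /= !eqseq_cons !andbT.
  by rewrite expr0 expr1 !mul1r (eq_sym a p) (eq_sym a q) mulrC mulN1r subrr.
- rewrite big_nat big1 // => j /andP[_ hj].
  case E: (rm j _ == [:: a]); last by rewrite mul0r mulr0.
  move/eqP: E => /(congr1 size); rewrite size_rm //.
Qed.

Lemma dR_PdiagE (a : 'I_n) : dR (Pdiag (R:=R) a) = fun _ _ => 0.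
Proof. by apply: funext => x; apply: funext => s; apply: dR_Pdiag. Qed.

End Forms.

Section Wedge.
Variables (R : realType) (n : nat).
Implicit Types (s t : seq 'I_n) (x y : pt R n).

Definition altx (g : Defs.form R n) x :=
  forall t (sg : 'S_(size t)), g x (permute sg) = psign R sg * g x t.

Lemma permuteE (x0 : 'I_n) s (sg : 'S_(size s)) : permute sg = perm_seq x0 sg s.
Proof. by rewrite /permute /perm_seq; apply: eq_map => i; rewrite (tnth_nth x0). Qed.

Lemma altx_gen (x0 : 'I_n) g x : altx g x ->
  forall m t (e : m = size t) (tau : 'S_m),
    g x (perm_seq x0 tau t) = psign R tau * g x t.
Proof. by move=> hg m t e; subst m => tau; rewrite -permuteE hg. Qed.

Lemma size_permute s (sg : 'S_(size s)) : size (permute sg) = size s.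
Proof. by rewrite size_map size_enum_ord. Qed.

Lemma wedge0 (f g : Defs.form R n) x s :
  (forall t, size t != 0%N -> f x t = 0) -> altx g x ->
  wedge f g x s = f x [::] * g x s.
Proof.
move=> hf hg; rewrite /wedge big_ord_recl [X in _ + X]big1 ?addr0; last first.
  move=> k _; rewrite big1 ?mulr0 // => sg _.
  rewrite hf ?mulr0 ?mul0r // size_takel ?size_permute //.
  by have := ltn_ord k.
rewrite fact0 subn0 -natrM mul1n.
under eq_bigr => sg _ do rewrite take0 drop0 hg mulrACA psign_sq mul1r.
rewrite sumr_const card_Sn -[f x [::] * g x s *+ _]mulr_natl mulKf //.
Qed.

Lemma sq_cancel (e u c d : R) : u * u = 1 -> e * u * c * (u * d) = e * c * d.
Proof. by move=> h; rewrite -!mulrA [c * (u * d)]mulrCA [u * (u * _)]mulrA h mul1r !mulrA. Qed.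

Lemma wedge1_core (x0 : 'I_n) m (a b : Defs.form R n) x s :
  size s = m.+1 ->
  (forall m' t (e : m' = size t) (tau : 'S_m'),
     b x (perm_seq x0 tau t) = psign R tau * b x t) ->
  \sum_(sg : 'S_m.+1) psign R sg * a x (take 1 (perm_seq x0 sg s))
        * b x (drop 1 (perm_seq x0 sg s))
  = (m`!)%:R * \sum_(p < m.+1) (-1) ^+ p * a x [:: nth x0 s p] * b x (rm p s).
Proof.
move=> hs hb; rewrite (sum_perm_split _ ord0) mulr_sumr; apply: eq_bigr => p _.
have E : forall u : seq 'I_n, (0 < size u)%N -> take 1 u = [:: nth x0 u 0].
  by case=> [|u0 u] //= _; rewrite take0.
under eq_bigr => tau _.
  rewrite E ?size_perm_seq //.
  rewrite -[X in nth _ _ X]/(nat_of_ord (@ord0 m)) nth_perm_seq lift_perm_id.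
  rewrite -[drop 1 _]cat0s -(take0 (perm_seq x0 (lift_perm ord0 p tau) s)).
  rewrite -/(rm 0 _) -[X in rm X _]/(nat_of_ord (@ord0 m)).
  rewrite rm_perm_seq // (hb m); last by rewrite size_rm hs.
  rewrite psign_lift add0n sq_cancel ?psign_sq // ?take0.
  over.
rewrite /= sumr_const card_Sn.
by rewrite -[_ *+ m`!]mulr_natl.
Qed.

Lemma wedge1 (x0 : 'I_n) (a b : Defs.form R n) x s :
  (forall t, size t != 1%N -> a x t = 0) -> altx b x ->
  wedge a b x s =
  \sum_(0 <= p < size s) (-1) ^+ p * a x [:: nth x0 s p] * b x (rm p s).
Proof.
move=> ha hb; have hb' := altx_gen x0 hb.
have -> : wedge a b x s = \sum_(k < (size s).+1)
     ((k`!)%:R * ((size s - k)`!)%:R)^-1 *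
     \sum_(sg : 'S_(size s))
        psign R sg * a x (take k (perm_seq x0 sg s)) * b x (drop k (perm_seq x0 sg s)).
  rewrite /wedge; apply: eq_bigr => k _; congr (_ * _); apply: eq_bigr => sg _.
  by rewrite (permuteE x0).
case hs: (size s) => [|m].
  rewrite big_geq // big_ord1 [X in _ * X]big1 ?mulr0 // => sg _.
  by rewrite take0 ha ?mulr0 ?mul0r.
rewrite big_ord_recl big_ord_recl [X in _ + (_ + X)]big1 ?addr0; last first.
  move=> k _; rewrite [X in _ * X]big1 ?mulr0 // => sg _.
  rewrite ha ?mulr0 ?mul0r // size_takel ?size_perm_seq //.
  by have := ltn_ord k.
rewrite [X in _ * X + _]big1 ?mulr0 ?add0r; last first.
  by move=> sg _; rewrite take0 ha ?mulr0 ?mul0r.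
rewrite /= (@wedge1_core x0 m a b x s hs hb') subSS subn0.
have -> : (bump 0 0)`! = 1%N by [].
by rewrite mul1r mulKf ?big_mkord.
Qed.

End Wedge.

Section Alt.
Variables (R : realType) (n : nat).
Implicit Types (s t : seq 'I_n) (x y : pt R n).

Lemma sgn_sq (p : nat) : (-1) ^+ p * (-1) ^+ p = 1 :> R.
Proof. by rewrite -signr_odd -signr_addb addbb. Qed.

Lemma altx_partial (b : Defs.form R n) (a : 'I_n) x :
  (forall y, altx b y) -> (forall t y v, derivable (fun y => b y t) y v) ->
  altx (fun x t => partial a (fun y => b y t) x) x.
Proof.
move=> hb hd t sg /=.
have -> : (fun y => b y (permute sg)) = fun y => psign R sg * b y t.
  by apply: funext => y; rewrite hb.
by rewrite partialZ.
Qed.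

Lemma dR_core (x0 : 'I_n) m t (hs : size t = m.+1) (sg : 'S_m.+1)
   (b : Defs.form R n) x :
  (forall y m' t' (e : m' = size t') (tau : 'S_m'),
     b y (perm_seq x0 tau t') = psign R tau * b y t') ->
  (forall t y v, derivable (fun y => b y t) y v) ->
  \sum_(0 <= j < m.+1) (-1) ^+ j *
      partial (nth x0 (perm_seq x0 sg t) j) (fun y => b y (rm j (perm_seq x0 sg t))) x
  = psign R sg * \sum_(0 <= j < m.+1) (-1) ^+ j *
      partial (nth x0 t j) (fun y => b y (rm j t)) x.
Proof.
move=> hb hd; rewrite !big_mkord mulr_sumr.
rewrite [RHS](reindex_inj (@perm_inj _ sg)) /=.
apply: eq_bigr => j _.
have [tau Htau] := perm_decomp sg j.
move: Htau; set p := sg j => Htau.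
rewrite nth_perm_seq -/p Htau rm_perm_seq //.
have -> : (fun y => b y (perm_seq x0 tau (rm p t))) =
          fun y => psign R tau * b y (rm p t).
  by apply: funext => y; rewrite (hb y m) // size_rm hs.
rewrite partialZ // psign_lift exprD.
rewrite sq_cancel ?sgn_sq //.
by rewrite mulrA.
Qed.

Lemma altx_dR (x0 : 'I_n) (b : Defs.form R n) x :
  (forall y, altx b y) -> (forall t y v, derivable (fun y => b y t) y v) ->
  altx (dR b) x.
Proof.
move=> hb hd t sg; rewrite (permuteE x0) !(dR_nat x0) size_perm_seq.
have hb' : forall y m' t' (e : m' = size t') (tau : 'S_m'),
     b y (perm_seq x0 tau t') = psign R tau * b y t'.
  by move=> y; apply: altx_gen.
move: sg; case hs: (size t) => [|m] sg.
  by rewrite !big_geq // mulr0.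
exact: dR_core.
Qed.

End Alt.

Section DFN.
Variables (R : realType) (n : nat).
Implicit Types (s t : seq 'I_n) (x y : pt R n).

Lemma sum_delta (i : 'I_n) (F : 'I_n -> R) :
  \sum_(b < n) (i == b)%:R * F b = F i.
Proof.
rewrite (bigD1 i) //= eqxx mul1r big1 ?addr0 // => b hb.
by rewrite eq_sym (negbTE hb) mul0r.
Qed.

Lemma wedge_zero_l (g : Defs.form R n) x s :
  wedge (fun _ _ => 0) g x s = 0.
Proof.
rewrite /wedge big1 // => k _; rewrite big1 ?mulr0 // => sg _.
by rewrite mulr0 mul0r.
Qed.

Lemma fn_dec_eq (x0 : 'I_n) (L : vform R n) (a b i : 'I_n) x s :
  (forall b y, altx (L b) y) -> (forall b t y v, derivable (fun y => L b y t) y v) ->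
  fn_dec 1 (Pdiag (R:=R) a) (coordvf (R:=R) a) (L b) (coordvf (R:=R) b) i x s =
    (i == b)%:R * \sum_(0 <= p < size s) (-1) ^+ p *
        (([:: nth x0 s p] == [:: a])%:R * x ord0 a) *
        partial a (fun y => L b y (rm p s)) x
  - (i == a)%:R * \sum_(0 <= p < size s) (-1) ^+ p *
        (([:: nth x0 s p] == [:: a])%:R * (a == b)%:R) * L b x (rm p s)
  - (i == a)%:R * ((([:: b] == [:: a])%:R * x ord0 a) * dR (L b) x s).
Proof.
move=> hL hd.
have hb := hL b.
rewrite /fn_dec lieb_coord dR_PdiagE wedge_zero_l !mulr0 !mul0r add0r addr0.
rewrite /coordvf.
have hP : forall t, size t != 1%N -> Pdiag (R:=R) a x t = 0.
  move=> t ht; rewrite /Pdiag; case: eqP => [E|_]; last by rewrite mul0r.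
  by rewrite E in ht.
rewrite (wedge1 x0 _ hP); last first.
  by rewrite lieD_coordE; apply: altx_partial.
rewrite (wedge1 x0 (b := L b)); first last.
- exact: hb.
- move=> t ht; rewrite lieD_coord /Pdiag partial_coord.
  case: eqP => [E|_]; last by rewrite mul0r.
  by rewrite E in ht.
rewrite wedge0; first last.
- by apply: (altx_dR x0).
- move=> t ht; rewrite contr_coord /Pdiag.
  case: eqP => [E|_]; last by rewrite mul0r.
  by case: t ht E.
rewrite contr_coord /Pdiag.
under eq_bigr => p _ do rewrite lieD_coord.
under [X in _ - X * _ + _]eq_bigr => p _ do rewrite lieD_coord /Pdiag partial_coord.
rewrite expr1.
ring.
Qed.

End DFN.

Section Formula.
Variables (R : realType) (n : nat).
Implicit Types (s t : seq 'I_n) (x y : pt R n).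

Lemma dFN_formula (x0 : 'I_n) (L : vform R n) :
  (forall b y, altx (L b) y) -> (forall b t y v, derivable (fun y => L b y t) y v) ->
  forall i x s, dFN L i x s =
    \sum_(0 <= p < size s) (-1) ^+ p *
       ((x ord0 (nth x0 s p) - x ord0 i) *
          partial (nth x0 s p) (fun y => L i y (rm p s)) x
        - (nth x0 s p == i)%:R * L i x (rm p s)).
Proof.
move=> hL hd i x s.
pose T2 (a b : 'I_n) := \sum_(0 <= p < size s) (-1) ^+ p *
        (([:: nth x0 s p] == [:: a])%:R * x ord0 a) *
        partial a (fun y => L b y (rm p s)) x.
pose T3 (a b : 'I_n) := \sum_(0 <= p < size s) (-1) ^+ p *
        (([:: nth x0 s p] == [:: a])%:R * (a == b)%:R) * L b x (rm p s).
pose T5 (a b : 'I_n) := (([:: b] == [:: a])%:R * x ord0 a) * dR (L b) x s.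
rewrite /dFN /fnb.
transitivity (\sum_(a < n) (T2 a i - (i == a)%:R *
   (\sum_(b < n) T3 a b + \sum_(b < n) T5 a b))).
  apply: eq_bigr => a _.
  rewrite (eq_bigr _ (fun b _ => fn_dec_eq x0 a b i x s hL hd)).
  rewrite !sumrB sum_delta -!mulr_sumr -/(T2 a i).
  rewrite /T2 /T3 /T5.
  ring.
rewrite sumrB sum_delta.
have E2 : \sum_(a < n) T2 a i = \sum_(0 <= p < size s) (-1) ^+ p *
     (x ord0 (nth x0 s p) * partial (nth x0 s p) (fun y => L i y (rm p s)) x).
  rewrite exchange_big /=; apply: eq_bigr => p _.
  rewrite -(sum_delta (nth x0 s p) (fun a => (-1) ^+ p *
     (x ord0 a * partial a (fun y => L i y (rm p s)) x))).
  by apply: eq_bigr => a _; rewrite eqseq_cons andbT; ring.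
have E3 : \sum_(b < n) T3 i b = \sum_(0 <= p < size s) (-1) ^+ p *
     ((nth x0 s p == i)%:R * L i x (rm p s)).
  rewrite /T3 exchange_big /=; apply: eq_bigr => p _.
  rewrite -(sum_delta i (fun b => (-1) ^+ p *
     ((nth x0 s p == i)%:R * L b x (rm p s)))).
  by apply: eq_bigr => b _; rewrite eqseq_cons andbT; ring.
have E5 : \sum_(b < n) T5 i b = x ord0 i * \sum_(0 <= p < size s) (-1) ^+ p *
     partial (nth x0 s p) (fun y => L i y (rm p s)) x.
  rewrite /T5 -(dR_nat x0) -(sum_delta i (fun b => x ord0 i * dR (L b) x s)).
  by apply: eq_bigr => b _; rewrite eqseq_cons andbT eq_sym; ring.
rewrite E2 E3 E5 mulr_sumr -big_split -sumrB; apply: eq_bigr => p _ /=.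
ring.
Qed.

End Formula.

Lemma rm_cons (T : Type) p (a : T) s : rm p.+1 (a :: s) = a :: rm p s.
Proof. by []. Qed.

Unset Implicit Arguments.

Theorem proposition16p1 (R : realType) (n : nat) :
  forall (k : nat) (L : vform R n),
    is_vform k L -> dFN L = @vzero R n ->
    (k = 0%N -> L = @vzero R n) /\
    ((0 < k)%N -> exists M : vform R n, is_vform k.-1 M /\ L = dFN M).
Proof.
move=> k L HL HdL.
case: n L HL HdL => [|n'] L HL HdL.
  split.
    by move=> _; apply: funext => -[].
  move=> _; exists (@vzero R 0); split; first by case.
  by apply: funext => -[].
pose x0 := @ord0 n'.
have hL : forall b y, altx (L b) y by move=> b y t sg; case: (HL b) => _ h _.
have hd : forall b t y v, derivable (fun y => L b y t) y v.
  by move=> b t y v; case: (HL b) => h _ _; apply: smooth_derivable.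
pose M : vform R n'.+1 := fun b y t => - L b y (b :: t).
have hM : forall b y, altx (M b) y.
  move=> b y t sg; rewrite /M (permuteE x0) cons_perm_seq.
  rewrite (altx_gen x0 (hL b y) (erefl (size (b :: t)))).
  by rewrite psign_lift add0n expr0 mul1r mulrN.
have hMd : forall b t y v, derivable (fun y => M b y t) y v.
  by move=> b t y v; exact: (derivableN (hd b (b :: t) y v)).
have key : forall i x s, L i x s = dFN M i x s.
  move=> i x s.
  have h0 : dFN L i x (i :: s) = 0 by rewrite HdL.
  rewrite (dFN_formula x0 hL hd) /= big_nat_recl // in h0.
  rewrite (dFN_formula x0 hM hMd).
  have rm0c : rm 0 (i :: s) = s by rewrite /rm /= drop0.
  move: h0; rewrite expr0 mul1r rm0c.
  rewrite [nth _ (i :: s) 0]/= subrr mul0r eqxx mul1r sub0r.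
  move=> /eqP; rewrite addrC subr_eq0 => /eqP <-.
  apply: eq_bigr => p _ /=; rewrite rm_cons /M partialN //.
  rewrite exprS; ring.
split.
  move=> k0; apply: funext => i; apply: funext => x; apply: funext => s.
  case: s => [|a s].
    by rewrite key (dFN_formula x0 hM hMd) big_geq.
  by case: (HL i) => _ _ ->; rewrite ?k0.
move=> kpos; exists M; split.
  move=> b; split.
  - by move=> s; apply: smoothN; case: (HL b) => h _ _; exact: h.
  - by move=> x s sg; apply: hM.
  - move=> x s hs; rewrite /M; case: (HL b) => _ _ ->; first by rewrite oppr0.
    by apply: contra hs => /eqP <-.
by apply: funext => i; apply: funext => x; apply: funext => s; apply: key.
Qed.
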